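(* Let $A\subseteq2^{\mathbb N}$ be analytic and non-Borel. Let $\phi$ be any $\mathbf\Pi^1_1$-rank on $\mathcal L^A_{\mathbf f}$ and $\psi$ any $\mathbf\Pi^1_1$-rank on $\mathcal L^A_{\mathbf f,0}$. Then there is no map $\Phi:\omega_1\to\omega_1$ such that $\psi(L)\le\Phi(\phi(L))$ for all $L\in\mathcal L^A_{\mathbf f,0}$.
   Context: Fix a bijection $h:2^{<\mathbb N}\to\mathbb N$ with $h(s)<h(t)$ whenever $|s|<|t|$ and let $s_n=h^{-1}(n)$. For $s\in2^{<\mathbb N}$ let $V_s=\{\sigma\in2^{\mathbb N}:s\sqsubset\sigma\}$, and let $f_n=\chi_{V_{s_n}}$. $[\mathbb N]$ is the set of infinite subsets of $\mathbb N$ (Polish subspace of $2^{\mathbb N}$). Define $\mathcal L^A_{\mathbf f}=\{L\in[\mathbb N]:(f_n|_A)_{n\in L}\text{ converges pointwise on }A\}$ and $\mathcal L^A_{\mathbf f,0}=\{L\in[\mathbb N]:(f_n|_A)_{n\in L}\text{ converges pointwise to }0\text{ on }A\}$; both are $\mathbf\Pi^1_1$. For a $\mathbf\Pi^1_1$ set $B$ in a Polish space, $\phi:B\to\omega_1$ is a $\mathbf\Pi^1_1$-rank if there are relations $\le_\Sigma\in\mathbf\Sigma^1_1$, $\le_\Pi\in\mathbf\Pi^1_1$ such that for all $y\in B$ and all $x$: $(x\in B\wedge\phi(x)\le\phi(y))\iff x\le_\Sigma y\iff x\le_\Pi y$. *)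

(* Defs.v *)
From Stdlib Require Import Reals List Arith.
Open Scope R_scope.

Definition cantor := nat -> bool.
Definition baire := nat -> nat.

Definition agree {X : Type} (n : nat) (x y : nat -> X) : Prop :=
  forall k, (k < n)%nat -> x k = y k.

Definition open_set (U : cantor -> Prop) : Prop :=
  forall x, U x -> exists n, forall y, agree n x y -> U y.

Inductive borel : (cantor -> Prop) -> Prop :=
| borel_open : forall U, open_set U -> borel U
| borel_compl : forall B, borel B -> borel (fun x => ~ B x)
| borel_cunion : forall B : nat -> cantor -> Prop,
    (forall n, borel (B n)) -> borel (fun x => exists n, B n x).

Definition is_borel (A : cantor -> Prop) : Prop :=
  exists B, borel B /\ forall x, A x <-> B x.

Definition closed2 (C : cantor -> baire -> Prop) : Prop :=
  forall x z, ~ C x z -> exists n, forall x' z',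
    agree n x x' -> agree n z z' -> ~ C x' z'.

Definition closed3 (C : cantor -> cantor -> baire -> Prop) : Prop :=
  forall x y z, ~ C x y z -> exists n, forall x' y' z',
    agree n x x' -> agree n y y' -> agree n z z' -> ~ C x' y' z'.

Definition analytic (A : cantor -> Prop) : Prop :=
  exists C, closed2 C /\ forall x, A x <-> exists z, C x z.

Definition sigma11_rel (R : cantor -> cantor -> Prop) : Prop :=
  exists C, closed3 C /\ forall x y, R x y <-> exists z, C x y z.

Definition pi11_rel (R : cantor -> cantor -> Prop) : Prop :=
  exists C, closed3 C /\ forall x y, R x y <-> ~ exists z, C x y z.

(** [N]: infinite subsets of N, as characteristic functions. *)
Definition infset (L : cantor) : Prop := forall m, exists n, (m <= n)%nat /\ L n = true.

(** Finite binary sequences 2^{<N} = list bool; s ⊏ sigma iff s is the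
    initial segment of sigma of length |s|. *)
Definition init_seg (sigma : cantor) (n : nat) : list bool := map sigma (seq 0 n).

Definition admissible_enum (h : list bool -> nat) (s : nat -> list bool) : Prop :=
  (forall n, h (s n) = n) /\ (forall t, s (h t) = t) /\
  (forall t u, (length t < length u)%nat -> (h t < h u)%nat).

(** f_n = characteristic function of V_{s_n} (real valued). *)
Definition fseq (s : nat -> list bool) (n : nat) (sigma : cantor) : R :=
  if list_eq_dec Bool.bool_dec (s n) (init_seg sigma (length (s n))) then 1 else 0.

(** (f_n|_A)_{n in L} converges pointwise on A (to l_sigma), i.e. for each sigma in A
    the subsequence (f_n(sigma))_{n in L} converges. *)
Definition subseq_conv_to (L : cantor) (u : nat -> R) (l : R) : Prop :=
  forall eps, eps > 0 -> exists N, forall n, (N <= n)%nat -> L n = true ->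
    Rabs (u n - l) < eps.

Definition Lf (s : nat -> list bool) (A : cantor -> Prop) (L : cantor) : Prop :=
  infset L /\ forall sigma, A sigma -> exists l, subseq_conv_to L (fun n => fseq s n sigma) l.

Definition Lf0 (s : nat -> list bool) (A : cantor -> Prop) (L : cantor) : Prop :=
  infset L /\ forall sigma, A sigma -> subseq_conv_to L (fun n => fseq s n sigma) 0.

(** omega_1, characterised up to isomorphism: a strict well-order (O, lt) which is
    total, uncountable, and all of whose proper initial segments are countable. *)
Definition is_omega1 (O : Type) (lt : O -> O -> Prop) : Prop :=
  (forall a, ~ lt a a) /\
  (forall a b c, lt a b -> lt b c -> lt a c) /\
  (forall a b, lt a b \/ a = b \/ lt b a) /\
  well_founded lt /\
  (~ exists f : nat -> O, forall b, exists n, f n = b) /\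
  (forall a, exists f : nat -> O, forall b, lt b a -> exists n, f n = b).

Definition ole {O : Type} (lt : O -> O -> Prop) (a b : O) : Prop := lt a b \/ a = b.

(** phi : B -> omega_1 is a Pi^1_1-rank on B ⊆ [N] (only values on B matter). *)
Definition pi11_rank {O : Type} (lt : O -> O -> Prop) (B : cantor -> Prop)
    (phi : cantor -> O) : Prop :=
  (forall x, B x -> infset x) /\
  exists leS leP : cantor -> cantor -> Prop,
    sigma11_rel leS /\ pi11_rel leP /\
    forall y, B y -> forall x, infset x ->
      ((B x /\ ole lt (phi x) (phi y)) <-> leS x y) /\ (leS x y <-> leP x y).

(* Main.v *)
Require Import Defs.
From Stdlib Require Import Reals List Arith Lia Lra Classical ClassicalEpsilon FunctionalExtensionality Cantor.

Lemma choice_ {X Y : Type} (R : X -> Y -> Prop) :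
  (forall a, exists b, R a b) -> exists f : X -> Y, forall a, R a (f a).
Proof.
  intros H. exists (fun a => proj1_sig (constructive_indefinite_description _ (H a))).
  intro a. exact (proj2_sig (constructive_indefinite_description _ (H a))).
Qed.

Lemma agree_mono {X} n m (x y : nat -> X) : (m <= n)%nat -> agree n x y -> agree m x y.
Proof. unfold agree; intros; apply H0; lia. Qed.

Lemma agree_sym {X} n (x y : nat -> X) : agree n x y -> agree n y x.
Proof. unfold agree; intros; symmetry; auto. Qed.

Lemma agree_trans {X} n (x y w : nat -> X) : agree n x y -> agree n y w -> agree n x w.
Proof. unfold agree; intros; rewrite H; auto. Qed.

Definition sep (P Q : cantor -> Prop) :=
  exists D, borel D /\ (forall x, P x -> D x) /\ (forall x, Q x -> ~ D x).

Lemma sep_mono P Q P' Q' : sep P Q -> (forall x, P' x -> P x) -> (forall x, Q' x -> Q x) -> sep P' Q'.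
Proof. intros [D [HD [H1 H2]]] HP HQ. exists D; split; auto. Qed.

Lemma sep_empty_l P Q : (forall x, ~ P x) -> sep P Q.
Proof.
  intros H. exists (fun _ => False). split; [apply borel_open; intros x []|].
  split; [intros x HP; exfalso; eapply H; eauto|auto].
Qed.

Lemma sep_empty_r P Q : (forall x, ~ Q x) -> sep P Q.
Proof.
  intros H. exists (fun _ => True). split; [apply borel_open; intros x _; exists 0%nat; auto|].
  split; [auto|intros x HQ; exfalso; eapply H; eauto].
Qed.

Lemma sep_union_l (P : nat -> cantor -> Prop) Q :
  (forall n, sep (P n) Q) -> sep (fun x => exists n, P n x) Q.
Proof.
  intros H. destruct (choice_ _ H) as [D HD].
  exists (fun x => exists n, D n x). split; [|split].
  - apply borel_cunion. intro n; apply (HD n).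
  - intros x [n Hn]. exists n. apply (HD n); auto.
  - intros x HQ [n Hn]. eapply (proj2 (proj2 (HD n))); eauto.
Qed.

Lemma sep_union_r P (Q : nat -> cantor -> Prop) :
  (forall n, sep P (Q n)) -> sep P (fun x => exists n, Q n x).
Proof.
  intros H. destruct (choice_ _ H) as [D HD].
  exists (fun x => ~ exists n, ~ D n x). split; [|split].
  - apply borel_compl. apply (borel_cunion (fun n x => ~ D n x)).
    intro n; apply borel_compl; apply (HD n).
  - intros x HP [n Hn]. apply Hn. apply (HD n); auto.
  - intros x [n Hn] HD'. apply HD'. exists n. eapply (proj2 (proj2 (HD n))); eauto.
Qed.

Definition AP (C : cantor -> baire -> Prop) (k : nat) (p : cantor) (q : baire) (x : cantor) :=
  exists z, C x z /\ agree k p x /\ agree k q z.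

Definition upd {X} (p : nat -> X) k v := fun i => if Nat.eqb i k then v else p i.

Definition cb (n : nat) : bool := Nat.eqb (fst (of_nat n)) 0.
Definition cm (n : nat) : nat := snd (of_nat n).

Lemma AP_split C k p q x : AP C k p q x ->
  exists n, AP C (S k) (upd p k (cb n)) (upd q k (cm n)) x.
Proof.
  intros [z [Hz [H1 H2]]].
  exists (to_nat (if x k then 0 else 1, z k)%nat).
  unfold cb, cm; rewrite cancel_of_to; simpl.
  exists z; split; [auto|split]; intros i Hi; unfold upd;
  destruct (Nat.eqb_spec i k).
  - subst; destruct (x k); reflexivity.
  - apply H1; lia.
  - subst; reflexivity.
  - apply H2; lia.
Qed.

Definition NS C1 C2 k p q p' q' := ~ sep (AP C1 k p q) (AP C2 k p' q').

Lemma step C1 C2 k p q p' q' : NS C1 C2 k p q p' q' ->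
  exists n n', NS C1 C2 (S k) (upd p k (cb n)) (upd q k (cm n)) (upd p' k (cb n')) (upd q' k (cm n')).
Proof.
  intros H. apply NNPP; intro Hn. apply H.
  assert (Hall : forall n n', sep (AP C1 (S k) (upd p k (cb n)) (upd q k (cm n)))
                                   (AP C2 (S k) (upd p' k (cb n')) (upd q' k (cm n')))).
  { intros n n'. apply NNPP; intro Hc. apply Hn; exists n, n'; exact Hc. }
  eapply sep_mono.
  - apply sep_union_l. intro n. apply sep_union_r. intro n'. apply (Hall n n').
  - intros x Hx. apply AP_split; auto.
  - intros x Hx. apply AP_split; auto.
Qed.

Record St := mkSt { sp : cantor; sq : baire; sp' : cantor; sq' : baire }.

Lemma stab {X} (P : nat -> nat -> X) : (forall k i, i <> k -> P (S k) i = P k i) ->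
  forall k, agree k (P k) (fun i => P (S i) i).
Proof.
  intros H k; induction k; intros i Hi; [lia|].
  destruct (Nat.eq_dec i k); [subst; reflexivity|].
  rewrite H by auto. apply IHk; lia.
Qed.

Lemma closed2_lim C x z : closed2 C ->
  (forall k, exists x' z', C x' z' /\ agree k x x' /\ agree k z z') -> C x z.
Proof.
  intros Hc H. apply NNPP; intro Hn. destruct (Hc _ _ Hn) as [n Hn'].
  destruct (H n) as [x' [z' [H1 [H2 H3]]]]. eapply Hn'; eauto.
Qed.

Lemma separation C1 C2 : closed2 C1 -> closed2 C2 ->
  (forall x z z', C1 x z -> C2 x z' -> False) ->
  sep (fun x => exists z, C1 x z) (fun x => exists z, C2 x z).
Proof.
  intros Hc1 Hc2 Hdis.
  apply NNPP; intro H0.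
  assert (Hch : forall a : nat * St, exists b : nat * nat,
    NS C1 C2 (fst a) (sp (snd a)) (sq (snd a)) (sp' (snd a)) (sq' (snd a)) ->
    NS C1 C2 (S (fst a)) (upd (sp (snd a)) (fst a) (cb (fst b))) (upd (sq (snd a)) (fst a) (cm (fst b)))
       (upd (sp' (snd a)) (fst a) (cb (snd b))) (upd (sq' (snd a)) (fst a) (cm (snd b)))).
  { intros a. destruct (classic (NS C1 C2 (fst a) (sp (snd a)) (sq (snd a)) (sp' (snd a)) (sq' (snd a)))) as [Hy|Hy].
    - destruct (step _ _ _ _ _ _ _ Hy) as [n [n' Hs]]. exists (n, n'); auto.
    - exists (0%nat, 0%nat); intro; contradiction. }
  destruct (choice_ _ Hch) as [F HF].
  pose (st0 := mkSt (fun _ => true) (fun _ => 0%nat) (fun _ => true) (fun _ => 0%nat)).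
  pose (nxt := fun k st => let b := F (k, st) in
     mkSt (upd (sp st) k (cb (fst b))) (upd (sq st) k (cm (fst b)))
          (upd (sp' st) k (cb (snd b))) (upd (sq' st) k (cm (snd b)))).
  pose (stq := fix f (k : nat) : St := match k with 0 => st0 | S k => nxt k (f k) end).
  assert (Hinv : forall k, NS C1 C2 k (sp (stq k)) (sq (stq k)) (sp' (stq k)) (sq' (stq k))).
  { induction k.
    - simpl. intro Hs. apply H0. eapply sep_mono; [exact Hs| |].
      + intros x [z Hz]. exists z; split; auto; split; intros i Hi; lia.
      + intros x [z Hz]. exists z; split; auto; split; intros i Hi; lia.
    - apply (HF (k, stq k)). exact IHk. }
  assert (Hupd : forall {X} (g : St -> nat -> X) (v : nat -> St -> X),
     (forall k st, g (nxt k st) = upd (g st) k (v k st)) ->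
     forall k, agree k (g (stq k)) (fun i => g (stq (S i)) i)).
  { intros X g v Hg. apply (stab (fun k => g (stq k))).
    intros k i Hik. simpl. rewrite Hg. unfold upd. apply Nat.eqb_neq in Hik. rewrite Hik. reflexivity. }
  set (x1 := fun i => sp (stq (S i)) i).
  set (z1 := fun i => sq (stq (S i)) i).
  set (x2 := fun i => sp' (stq (S i)) i).
  set (z2 := fun i => sq' (stq (S i)) i).
  assert (A1 : forall k, agree k (sp (stq k)) x1) by (apply (Hupd _ sp (fun k st => cb (fst (F (k, st))))); reflexivity).
  assert (A2 : forall k, agree k (sq (stq k)) z1) by (apply (Hupd _ sq (fun k st => cm (fst (F (k, st))))); reflexivity).
  assert (A3 : forall k, agree k (sp' (stq k)) x2) by (apply (Hupd _ sp' (fun k st => cb (snd (F (k, st))))); reflexivity).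
  assert (A4 : forall k, agree k (sq' (stq k)) z2) by (apply (Hupd _ sq' (fun k st => cm (snd (F (k, st))))); reflexivity).
  assert (HC1 : C1 x1 z1).
  { apply closed2_lim; auto. intro k.
    apply NNPP; intro Hn. apply (Hinv k). apply sep_empty_l.
    intros x [z [Hz [H1 H2]]]. apply Hn. exists x, z. split; auto.
    split; eapply agree_trans; [apply agree_sym, A1| exact H1| apply agree_sym, A2| exact H2]. }
  assert (HC2 : C2 x2 z2).
  { apply closed2_lim; auto. intro k.
    apply NNPP; intro Hn. apply (Hinv k). apply sep_empty_r.
    intros x [z [Hz [H1 H2]]]. apply Hn. exists x, z. split; auto.
    split; eapply agree_trans; [apply agree_sym, A3| exact H1| apply agree_sym, A4| exact H2]. }
  destruct (classic (forall i, x1 i = x2 i)) as [Heq|Hne].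
  - apply (Hdis x1 z1 z2); auto. apply closed2_lim; auto. intro k.
    exists x2, z2. split; auto. split; intros i _; auto.
  - apply not_all_ex_not in Hne. destruct Hne as [i Hi].
    apply (Hinv (S i)). exists (fun x => x i = x1 i). split; [|split].
    + apply borel_open. intros x Hx. exists (S i). intros y Hy. rewrite <- Hy by lia. auto.
    + intros x [z [Hz [H1 H2]]]. rewrite <- H1 by lia. apply A1; lia.
    + intros x [z [Hz [H1 H2]]] Hx. apply Hi. rewrite <- Hx, <- H1 by lia. symmetry. apply A3; lia.
Qed.

Lemma souslin A : analytic A -> analytic (fun x => ~ A x) -> is_borel A.
Proof.
  intros [C1 [Hc1 H1]] [C2 [Hc2 H2]].
  destruct (separation C1 C2 Hc1 Hc2) as [D [HD [HA HB]]].
  - intros x z z' Hz Hz'. apply (proj2 (H2 x)); [exists z'; auto|]. apply H1; exists z; auto.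
  - exists D; split; auto. intro x; split.
    + intro Ha; apply HA, H1, Ha.
    + intro Hd. apply NNPP; intro Hn. apply (HB x); auto. apply H2; auto.
Qed.

Lemma analytic_ext (P Q : cantor -> Prop) : analytic P -> (forall x, P x <-> Q x) -> analytic Q.
Proof. intros [C [Hc H]] He. exists C; split; auto. intro x; rewrite <- He; auto. Qed.

Lemma analytic_empty : analytic (fun _ => False).
Proof. exists (fun _ _ => False). split. - intros x z _. exists 0%nat; auto.
  - intro x; split; [intros []|intros [z []]]. Qed.

Lemma analytic_cunion (Q : nat -> cantor -> Prop) : (forall n, analytic (Q n)) ->
  analytic (fun x => exists n, Q n x).
Proof.
  intros H. destruct (choice_ _ H) as [C HC].
  exists (fun (x : cantor) (z : baire) => C (z 0%nat) x (fun k => z (S k))). split.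
  - intros x z Hn. destruct (proj1 (HC (z 0%nat)) x (fun k => z (S k)) Hn) as [n Hn'].
    exists (S n). intros x' z' Hx Hz. rewrite <- (Hz 0%nat) by lia.
    apply Hn'. + eapply agree_mono; [|exact Hx]; lia.
    + intros k Hk. apply Hz. lia.
  - intro x. split.
    + intros [n Hn]. apply (proj2 (HC n)) in Hn. destruct Hn as [z Hz].
      exists (fun k => match k with 0 => n | S k => z k end). exact Hz.
    + intros [z Hz]. exists (z 0%nat). apply (proj2 (HC _)). exists (fun k => z (S k)); auto.
Qed.

Definition cont2 (a : cantor -> baire -> cantor) := forall sg w n, exists m, forall sg' w',
  agree m sg sg' -> agree m w w' -> agree n (a sg w) (a sg' w').

Definition ev (z : baire) : baire := fun k => z (2 * k)%nat.
Definition od (z : baire) : baire := fun k => z (S (2 * k))%nat.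
Definition merge (w z : baire) : baire := fun k => if Nat.even k then w (Nat.div2 k) else z (Nat.div2 k).

Lemma ev_merge w z : ev (merge w z) = w.
Proof. apply functional_extensionality; intro k; unfold ev, merge.
  replace (Nat.even (2*k)) with true by (symmetry; apply Nat.even_spec; exists k; lia).
  rewrite Nat.div2_double. reflexivity. Qed.
Lemma od_merge w z : od (merge w z) = z.
Proof. apply functional_extensionality; intro k; unfold od, merge.
  replace (Nat.even (S (2*k))) with false.
  2:{ symmetry. apply Bool.not_true_iff_false. intro He. apply Nat.even_spec in He.
      destruct He as [j Hj]. lia. }
  rewrite Nat.div2_succ_double. reflexivity. Qed.

Lemma analytic_rel (R : cantor -> cantor -> Prop) a b : sigma11_rel R -> cont2 a -> cont2 b ->
  analytic (fun sg => exists w, R (a sg w) (b sg w)).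
Proof.
  intros [C [Hc HR]] Ha Hb.
  exists (fun sg z => C (a sg (ev z)) (b sg (ev z)) (od z)). split.
  - intros sg z Hn. destruct (Hc _ _ _ Hn) as [n Hn'].
    destruct (Ha sg (ev z) n) as [m1 Hm1]. destruct (Hb sg (ev z) n) as [m2 Hm2].
    exists (S (2 * (m1 + m2 + n)))%nat. intros sg' z' Hs Hz.
    assert (He : agree (m1 + m2) (ev z) (ev z')) by (intros k Hk; unfold ev; apply Hz; lia).
    assert (Ho : agree n (od z) (od z')) by (intros k Hk; unfold od; apply Hz; lia).
    apply Hn'.
    + apply Hm1; eapply agree_mono; try eassumption; lia.
    + apply Hm2; eapply agree_mono; try eassumption; lia.
    + auto.
  - intro sg; split.
    + intros [w Hw]. apply HR in Hw. destruct Hw as [z Hz]. exists (merge w z).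
      rewrite ev_merge, od_merge; auto.
    + intros [z Hz]. exists (ev z). apply HR. exists (od z); auto.
Qed.
Import ListNotations.
Open Scope R_scope.

Definition eqlb (a b : list bool) : bool := if list_eq_dec Bool.bool_dec a b then true else false.
Lemma eqlb_true a b : eqlb a b = true <-> a = b.
Proof. unfold eqlb; destruct (list_eq_dec Bool.bool_dec a b); split; congruence. Qed.

Definition gB (s : nat -> list bool) (sg : cantor) : cantor :=
  fun n => eqlb (s n) (init_seg sg (length (s n))).
Definition gO (s : nat -> list bool) (sg : cantor) : cantor :=
  fun n => orb (eqlb (s n) (init_seg sg (length (s n))))
    (eqlb (s n) (init_seg sg (pred (length (s n))) ++ [negb (sg (pred (length (s n))))])).

Lemma init_seg_length sg L : length (init_seg sg L) = L.
Proof. unfold init_seg. rewrite length_map, length_seq. reflexivity. Qed.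

Lemma init_seg_nth sg L i : (i < L)%nat -> nth i (init_seg sg L) false = sg i.
Proof. intros H. unfold init_seg. rewrite nth_indep with (d' := sg 0%nat) by (rewrite length_map, length_seq; auto).
  rewrite map_nth, seq_nth by auto. reflexivity. Qed.

Lemma init_seg_agree sg tau L : agree L sg tau -> init_seg sg L = init_seg tau L.
Proof. intros H. unfold init_seg. apply map_ext_in. intros a Ha. apply in_seq in Ha. apply H; lia. Qed.

Lemma init_seg_eq_agree sg tau L : init_seg sg L = init_seg tau L -> agree L sg tau.
Proof. intros H i Hi. rewrite <- (init_seg_nth sg L i Hi), <- (init_seg_nth tau L i Hi), H. reflexivity. Qed.

Lemma init_seg_S sg L : init_seg sg (S L) = init_seg sg L ++ [sg L].
Proof. unfold init_seg. rewrite seq_S, map_app. reflexivity. Qed.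

Lemma fseq_cases s n tau : (s n = init_seg tau (length (s n)) /\ fseq s n tau = 1) \/
  (s n <> init_seg tau (length (s n)) /\ fseq s n tau = 0).
Proof. unfold fseq. destruct (list_eq_dec Bool.bool_dec (s n) (init_seg tau (length (s n)))); auto. Qed.

Section Adm.
Variables (h : list bool -> nat) (s : nat -> list bool).
Hypothesis Hadm : admissible_enum h s.

Lemma h_ge : forall t, (length t <= h t)%nat.
Proof.
  destruct Hadm as [H1 [H2 H3]].
  assert (forall m t, length t = m -> (m <= h t)%nat).
  { induction m; intros t Ht; [lia|].
    assert (Hr := H3 (repeat false m) t). rewrite repeat_length in Hr.
    specialize (IHm (repeat false m) (repeat_length _ _)). specialize (Hr ltac:(lia)). lia. }
  intro t; apply H; auto.
Qed.

Lemma len_s n : (length (s n) <= n)%nat.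
Proof. destruct Hadm as [H1 _]. rewrite <- (H1 n) at 2. apply h_ge. Qed.

Lemma conv0_bound (L : cantor) tau d :
  (forall n, L n = true -> fseq s n tau = 1 -> (length (s n) <= d)%nat) ->
  subseq_conv_to L (fun n => fseq s n tau) 0.
Proof.
  destruct Hadm as [H1 [H2 H3]]. intros Hb eps Heps.
  exists (h (repeat false (S d))). intros n Hn HL.
  destruct (fseq_cases s n tau) as [[_ Hf]|[_ Hf]].
  - exfalso. specialize (Hb n HL Hf). assert (Hl := H3 (s n) (repeat false (S d))).
    rewrite repeat_length, H1 in Hl. specialize (Hl ltac:(lia)). lia.
  - rewrite Hf. rewrite Rminus_0_r, Rabs_R0. auto.
Qed.

Lemma conv1_all (L : cantor) tau :
  (forall n, L n = true -> fseq s n tau = 1) -> subseq_conv_to L (fun n => fseq s n tau) 1.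
Proof. intros H eps Heps. exists 0%nat. intros n _ HL. rewrite H by auto.
  rewrite Rminus_diag, Rabs_R0. auto. Qed.

Lemma noconv0 (L : cantor) tau :
  (forall N, exists n, (N <= n)%nat /\ L n = true /\ fseq s n tau = 1) ->
  ~ subseq_conv_to L (fun n => fseq s n tau) 0.
Proof. intros H Hc. destruct (Hc (1/2) ltac:(lra)) as [N HN].
  destruct (H N) as [n [Hn [HL Hf]]]. specialize (HN n Hn HL). simpl in HN. rewrite Hf in HN.
  rewrite Rminus_0_r, Rabs_R1 in HN. lra. Qed.

Lemma noconv (L : cantor) tau :
  (forall N, exists n, (N <= n)%nat /\ L n = true /\ fseq s n tau = 1) ->
  (forall N, exists n, (N <= n)%nat /\ L n = true /\ fseq s n tau = 0) ->
  ~ exists l, subseq_conv_to L (fun n => fseq s n tau) l.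
Proof. intros H H' [l Hc]. destruct (Hc (1/2) ltac:(lra)) as [N HN].
  destruct (H N) as [n [Hn [HL Hf]]]. destruct (H' N) as [n' [Hn' [HL' Hf']]].
  assert (A1 := HN n Hn HL). assert (A2 := HN n' Hn' HL'). simpl in A1, A2.
  rewrite Hf in A1. rewrite Hf' in A2.
  unfold Rabs in A1, A2. destruct (Rcase_abs (1 - l)); destruct (Rcase_abs (0 - l)); lra.
Qed.
End Adm.
Import ListNotations.
Open Scope R_scope.

Section Adm2.
Variables (h : list bool -> nat) (s : nat -> list bool).
Hypothesis Hadm : admissible_enum h s.

Lemma s_h t : s (h t) = t.
Proof. apply Hadm. Qed.

Lemma gB_at sg m : gB s sg (h (init_seg sg m)) = true.
Proof. unfold gB. rewrite s_h, init_seg_length. apply eqlb_true; auto. Qed.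

Lemma gB_infset sg : infset (gB s sg).
Proof. intro m. exists (h (init_seg sg m)). split; [|apply gB_at].
  assert (H := h_ge h s Hadm (init_seg sg m)). rewrite init_seg_length in H. auto. Qed.

Lemma gB_self sg n : gB s sg n = true -> fseq s n sg = 1.
Proof. unfold gB. intro H. apply eqlb_true in H.
  destruct (fseq_cases s n sg) as [[_ Hf]|[Hn _]]; auto. contradiction. Qed.

Lemma diff_bound sg tau d L : sg d <> tau d -> init_seg sg L = init_seg tau L -> (L <= d)%nat.
Proof. intros Hd He. destruct (le_lt_dec L d); auto. exfalso. apply Hd.
  apply (init_seg_eq_agree _ _ _ He); auto. Qed.

Lemma gB_bound sg tau d n : sg d <> tau d -> gB s sg n = true -> fseq s n tau = 1 ->
  (length (s n) <= d)%nat.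
Proof. intros Hd Hg Hf. unfold gB in Hg. apply eqlb_true in Hg.
  destruct (fseq_cases s n tau) as [[He _]|[_ Hf']]; [|rewrite Hf' in Hf; lra].
  apply (diff_bound sg tau); congruence. Qed.

Lemma ne_diff (sg tau : cantor) : sg <> tau -> exists d, sg d <> tau d.
Proof. intro H. apply NNPP; intro Hn. apply H. apply functional_extensionality.
  intro k. apply NNPP; intro Hk. apply Hn; exists k; auto. Qed.

Lemma gB_Lf A sg : Lf s A (gB s sg).
Proof. split; [apply gB_infset|]. intros tau Ha.
  destruct (classic (sg = tau)) as [<-|Hne].
  - exists 1. apply (conv1_all s). intros n Hn. apply gB_self; auto.
  - destruct (ne_diff _ _ Hne) as [d Hd]. exists 0. apply (conv0_bound h s Hadm _ _ d).
    intros n Hn Hf. eapply gB_bound; eauto.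
Qed.

Lemma gB_Lf0 (A : cantor -> Prop) sg : Lf0 s A (gB s sg) <-> ~ A sg.
Proof. split.
  - intros [_ H] Ha. specialize (H sg Ha). revert H. apply (noconv0 s).
    intro N. exists (h (init_seg sg N)). split; [|split].
    + assert (H := h_ge h s Hadm (init_seg sg N)). rewrite init_seg_length in H. auto.
    + apply gB_at.
    + apply gB_self, gB_at.
  - intros Hna. split; [apply gB_infset|]. intros tau Ha.
    assert (Hne : sg <> tau) by (intro; subst; auto).
    destruct (ne_diff _ _ Hne) as [d Hd]. apply (conv0_bound h s Hadm _ _ d).
    intros n Hn Hf. eapply gB_bound; eauto.
Qed.

Lemma gO_at2 sg m : gO s sg (h (init_seg sg m ++ [negb (sg m)])) = true.
Proof. unfold gO. rewrite s_h. rewrite length_app, init_seg_length. simpl.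
  replace (pred (m + 1)) with m by lia. rewrite Bool.orb_true_iff; right. apply eqlb_true; auto. Qed.

Lemma gO_at1 sg m : gO s sg (h (init_seg sg m)) = true.
Proof. unfold gO. rewrite Bool.orb_true_iff; left. apply gB_at. Qed.

Lemma gO_fseq2 sg m : fseq s (h (init_seg sg m ++ [negb (sg m)])) sg = 0.
Proof. destruct (fseq_cases s (h (init_seg sg m ++ [negb (sg m)])) sg) as [[He _]|[_ Hf]]; auto.
  exfalso. rewrite s_h, length_app, init_seg_length in He. simpl in He.
  replace (m + 1)%nat with (S m) in He by lia. rewrite init_seg_S in He.
  apply app_inj_tail in He. destruct He as [_ He]. destruct (sg m); discriminate. Qed.

Lemma gO_bound sg tau d n : sg d <> tau d -> gO s sg n = true -> fseq s n tau = 1 ->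
  (length (s n) <= S d)%nat.
Proof. intros Hd Hg Hf.
  destruct (fseq_cases s n tau) as [[He _]|[_ Hf']]; [|rewrite Hf' in Hf; lra].
  unfold gO in Hg. apply Bool.orb_true_iff in Hg. destruct Hg as [Hg|Hg]; apply eqlb_true in Hg.
  - assert (length (s n) <= d)%nat by (apply (diff_bound sg tau); congruence). lia.
  - destruct (length (s n)) as [|L] eqn:EL.
    + lia.
    + simpl in Hg. rewrite He, init_seg_S in Hg. apply app_inj_tail in Hg. destruct Hg as [Hg _].
      assert (L <= d)%nat by (apply (diff_bound sg tau); congruence). lia.
Qed.

Lemma gO_infset sg : infset (gO s sg).
Proof. intro m. exists (h (init_seg sg m)). split; [|apply gO_at1].
  assert (H := h_ge h s Hadm (init_seg sg m)). rewrite init_seg_length in H. auto. Qed.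

Lemma gO_Lf (A : cantor -> Prop) sg : Lf s A (gO s sg) <-> ~ A sg.
Proof. split.
  - intros [_ H] Ha. specialize (H sg Ha). revert H. apply (noconv s).
    + intro N. exists (h (init_seg sg N)). split; [|split].
      * assert (H := h_ge h s Hadm (init_seg sg N)). rewrite init_seg_length in H. auto.
      * apply gO_at1.
      * apply gB_self, gB_at.
    + intro N. exists (h (init_seg sg N ++ [negb (sg N)])). split; [|split].
      * assert (H := h_ge h s Hadm (init_seg sg N ++ [negb (sg N)])).
        rewrite length_app, init_seg_length in H. simpl in H. lia.
      * apply gO_at2.
      * apply gO_fseq2.
  - intros Hna. split; [apply gO_infset|]. intros tau Ha.
    assert (Hne : sg <> tau) by (intro; subst; auto).
    destruct (ne_diff _ _ Hne) as [d Hd]. exists 0. apply (conv0_bound h s Hadm _ _ (S d)).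
    intros n Hn Hf. eapply gO_bound; eauto.
Qed.

Lemma gB_cont n sg sg' : agree n sg sg' -> agree n (gB s sg) (gB s sg').
Proof. intros H k Hk. unfold gB. rewrite (init_seg_agree sg sg'); auto.
  eapply agree_mono; [|exact H]. assert (Hl := len_s h s Hadm k). lia. Qed.

Lemma gO_cont n sg sg' : agree n sg sg' -> agree n (gO s sg) (gO s sg').
Proof. intros H k Hk. assert (Hl := len_s h s Hadm k). unfold gO.
  rewrite (init_seg_agree sg sg' (length (s k))) by (eapply agree_mono; [|exact H]; lia).
  rewrite (init_seg_agree sg sg' (pred (length (s k)))) by (eapply agree_mono; [|exact H]; lia).
  rewrite (H (pred (length (s k)))) by lia. reflexivity. Qed.
End Adm2.

Section Om.
Variables (O : Type) (lt : O -> O -> Prop).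
Hypothesis Hw : is_omega1 O lt.

Lemma not_ole_lt a b : ~ ole lt a b -> lt b a.
Proof. intro H. destruct Hw as [_ [_ [Ht _]]]. unfold ole in H.
  destruct (Ht a b) as [|[|]]; auto; exfalso; apply H; auto. Qed.

Lemma ole_trans a b c : ole lt a b -> ole lt b c -> ole lt a c.
Proof. destruct Hw as [_ [Htr _]]. unfold ole. intros [H1|H1] [H2|H2]; subst; eauto. Qed.

Lemma enum_le a : exists e : nat -> O, forall b, ole lt b a -> exists n, e n = b.
Proof. destruct Hw as [_ [_ [_ [_ [_ Hc]]]]]. destruct (Hc a) as [f Hf].
  exists (fun n => match n with 0 => a | S n => f n end).
  intros b [Hb| ->]. - destruct (Hf b Hb) as [n Hn]. exists (S n); auto. - exists 0%nat; auto. Qed.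

Lemma countable_bounded (c : nat -> O) : exists g, forall n, ole lt (c n) g.
Proof.
  apply NNPP; intro H.
  assert (Hu : forall g, exists n, lt g (c n)).
  { intro g. apply NNPP; intro H'. apply H. exists g. intro n. apply NNPP; intro Hn.
    apply H'. exists n. apply not_ole_lt; auto. }
  destruct Hw as [_ [_ [_ [_ [Hnc Hc]]]]].
  destruct (choice_ _ Hc) as [F HF].
  apply Hnc. exists (fun k => F (c (fst (Cantor.of_nat k))) (snd (Cantor.of_nat k))).
  intro b. destruct (Hu b) as [n Hn]. destruct (HF (c n) b Hn) as [m Hm].
  exists (Cantor.to_nat (n, m)). rewrite Cantor.cancel_of_to. simpl. auto.
Qed.
End Om.

Definition dec (w : baire) : cantor := fun k => Nat.eqb (w k) 0.
Definition enc (t : cantor) : baire := fun k => if t k then 0%nat else 1%nat.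
Lemma dec_enc t : dec (enc t) = t.
Proof. apply functional_extensionality; intro k; unfold dec, enc; destruct (t k); auto. Qed.

Theorem mainTheorem18 :
  forall (h : list bool -> nat) (s : nat -> list bool),
    admissible_enum h s ->
  forall A : cantor -> Prop,
    analytic A -> ~ is_borel A ->
  forall (O : Type) (lt : O -> O -> Prop),
    is_omega1 O lt ->
  forall phi psi : cantor -> O,
    pi11_rank lt (Lf s A) phi ->
    pi11_rank lt (Lf0 s A) psi ->
    ~ exists Phi : O -> O,
        forall L, Lf0 s A L -> ole lt (psi L) (Phi (phi L)).
Proof.
  intros h s Hadm A HA HnB O lt Hw phi psi Hphi Hpsi [Phi HPhi].
  assert (coA : ~ analytic (fun x => ~ A x)) by (intro Hc; apply HnB; apply souslin; auto).
  destruct Hphi as [_ [leS [leP [HS [_ Hr]]]]].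
  assert (St1 : exists a0, forall sg, ole lt (phi (gB s sg)) a0).
  { apply NNPP; intro Hn. apply coA.
    assert (Hu : forall a, exists t, lt a (phi (gB s t))).
    { intro a. apply NNPP; intro H'. apply Hn. exists a. intro t. apply NNPP; intro Ht.
      apply H'. exists t. apply (not_ole_lt O lt Hw); auto. }
    apply analytic_ext with (P := fun sg => exists w, leS (gO s sg) (gB s (dec w))).
    - apply (analytic_rel leS (fun sg w => gO s sg) (fun sg w => gB s (dec w))); auto.
      + intros sg w n. exists n. intros sg' w' H1 _. apply (gO_cont h s Hadm); auto.
      + intros sg w n. exists n. intros sg' w' _ H2. apply (gB_cont h s Hadm).
        intros k Hk. unfold dec. rewrite H2; auto.
    - intro sg. split.
      + intros [w Hl]. apply (proj2 (proj1 (Hr _ (gB_Lf h s Hadm A (dec w)) _ (gO_infset h s Hadm sg)))) in Hl.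
        apply (proj1 (gO_Lf h s Hadm A sg)). apply Hl.
      + intros Hna. apply (proj2 (gO_Lf h s Hadm A sg)) in Hna.
        destruct (Hu (phi (gO s sg))) as [t Ht]. exists (enc t). rewrite dec_enc.
        apply (proj1 (proj1 (Hr _ (gB_Lf h s Hadm A t) _ (gO_infset h s Hadm sg)))).
        split; auto. left; auto. }
  destruct St1 as [a0 Ha0].
  destruct (enum_le O lt Hw a0) as [e0 He0].
  destruct (countable_bounded O lt Hw (fun n => Phi (e0 n))) as [g Hg].
  assert (St2 : forall sg, ~ A sg -> ole lt (psi (gB s sg)) g).
  { intros sg Hna. apply (proj2 (gB_Lf0 h s Hadm A sg)) in Hna.
    destruct (He0 _ (Ha0 sg)) as [n Hn].
    eapply (ole_trans O lt Hw); [apply HPhi; auto|]. rewrite <- Hn. apply Hg. }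
  destruct (enum_le O lt Hw g) as [e1 He1].
  assert (Hy : forall n, exists y, (exists y', Lf0 s A y' /\ psi y' = e1 n) -> Lf0 s A y /\ psi y = e1 n).
  { intro n. destruct (classic (exists y', Lf0 s A y' /\ psi y' = e1 n)) as [[y' Hy']|Hn].
    - exists y'; auto. - exists (fun _ => true); intro; contradiction. }
  destruct (choice_ _ Hy) as [y Hyy].
  destruct Hpsi as [_ [leS' [leP' [HS' [_ Hr']]]]].
  apply coA.
  apply analytic_ext with (P := fun sg => exists n, Lf0 s A (y n) /\ leS' (gB s sg) (y n)).
  - apply analytic_cunion. intro n. destruct (classic (Lf0 s A (y n))) as [Hl|Hl].
    + apply analytic_ext with (P := fun sg => exists w : baire, leS' (gB s sg) (y n)).
      * apply (analytic_rel leS' (fun sg w => gB s sg) (fun sg w => y n)); auto.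
        -- intros sg w m. exists m. intros sg' w' H1 _. apply (gB_cont h s Hadm); auto.
        -- intros sg w m. exists 0%nat. intros. intros k _; auto.
      * intro sg. split. -- intros [_ H]; auto. -- intros [_ H]; exists (fun _ => 0%nat); auto.
    + apply analytic_ext with (P := fun _ => False). * apply analytic_empty.
      * intro sg; split; [intros []|intros [H _]; contradiction].
  - intro sg. split.
    + intros [n [Hl Hs]]. apply (proj2 (proj1 (Hr' _ Hl _ (gB_infset h s Hadm sg)))) in Hs.
      apply (proj1 (gB_Lf0 h s Hadm A sg)). apply Hs.
    + intros Hna. destruct (He1 _ (St2 sg Hna)) as [n Hn].
      apply (proj2 (gB_Lf0 h s Hadm A sg)) in Hna.
      destruct (Hyy n (ex_intro _ _ (conj Hna (eq_sym Hn)))) as [Hl Hp].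
      exists n. split; auto.
      apply (proj1 (proj1 (Hr' _ Hl _ (gB_infset h s Hadm sg)))).
      split; auto. right. congruence.
Qed.
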